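(* Let $S\subseteq\mathbb{R}^n$ be a closed set, $\bar x\in S$ and $d\in T_S(\bar x)$. Then $$T_S^2(\bar x;d)+\hat T_S(\bar x;d)=T_S^2(\bar x;d)\quad\text{and}\quad T_S^{''}(\bar x;d)+\hat T_S(\bar x;d)=T_S^{''}(\bar x;d).$$
   Context: $T_S(\bar x)=\{d\mid \exists t_k\downarrow 0,\ d_k\to d,\ \bar x+t_kd_k\in S\}$ is the tangent cone. $T_S^2(\bar x;d):=\{w\mid \exists t_k\downarrow 0,\ w_k\to w,\ \bar x+t_kd+\tfrac12 t_k^2w_k\in S\}$ (outer second-order tangent set); $T_S^{''}(\bar x;d):=\{w\mid \exists (t_k,r_k)\downarrow(0,0),\ w_k\to w,\ t_k/r_k\to0,\ \bar x+t_kd+\tfrac12 t_kr_kw_k\in S\}$ (asymptotic second-order tangent cone). The directional regular (Clarke) tangent cone is the Painlevé–Kuratowski lower limit $\hat T_S(\bar x;d):=\liminf_{t\downarrow 0,\,d'\to d,\,\bar x+td'\in S}T_S(\bar x+td')$, i.e. the set of $v$ such that for every sequence $t_k\downarrow0$, $d'_k\to d$ with $\bar x+t_kd'_k\in S$ there exist $v_k\to v$ with $v_k\in T_S(\bar x+t_kd'_k)$ for all large $k$. *)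

(* Defs.v *)
From HB Require Import structures.
From mathcomp Require Import all_boot all_order all_algebra.
From mathcomp Require Import all_classical all_reals all_analysis.
Set Implicit Arguments. Unset Strict Implicit. Unset Printing Implicit Defensive.
Import Order.TTheory GRing.Theory Num.Theory.
Import numFieldNormedType.Exports.
Local Open Scope classical_set_scope.
Local Open Scope ring_scope.

Section Cones.
Context {R : realType} {n : nat}.
Notation V := 'rV[R]_n.

(* t_k "decreases to 0": positive terms converging to 0 *)
Definition down0 (t : nat -> R) : Prop := (forall k, 0 < t k) /\ t @ \oo --> 0.

Definition setsum_mk (A B : set V) : set V :=
  [set z | exists a b, A a /\ B b /\ z = a + b].

Definition tcone (S : set V) (x : V) : set V :=
  [set d | exists (t : nat -> R) (dk : nat -> V),
     down0 t /\ dk @ \oo --> d /\ forall k, S (x + t k *: dk k)].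

Definition tcone2 (S : set V) (x d : V) : set V :=
  [set w | exists (t : nat -> R) (wk : nat -> V),
     down0 t /\ wk @ \oo --> w /\
     forall k, S (x + t k *: d + (2^-1 * t k ^+ 2) *: wk k)].

Definition tcone2asym (S : set V) (x d : V) : set V :=
  [set w | exists (t r : nat -> R) (wk : nat -> V),
     down0 t /\ down0 r /\ (fun k => t k / r k) @ \oo --> 0 /\
     wk @ \oo --> w /\
     forall k, S (x + t k *: d + (2^-1 * t k * r k) *: wk k)].

Definition dclarke (S : set V) (x d : V) : set V :=
  [set v | forall (t : nat -> R) (dk : nat -> V),
     down0 t -> dk @ \oo --> d -> (forall k, S (x + t k *: dk k)) ->
     exists vk : nat -> V, vk @ \oo --> v /\
       \forall k \near \oo, tcone S (x + t k *: dk k) (vk k)].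
End Cones.

(* Main.v *)
Require Import Defs.
From HB Require Import structures.
From mathcomp Require Import all_boot all_order all_algebra.
From mathcomp Require Import all_classical all_reals all_analysis.
From mathcomp Require Import lra.
Import Order.TTheory GRing.Theory Num.Theory.
Import numFieldNormedType.Exports.
Local Open Scope classical_set_scope.
Local Open Scope ring_scope.

Lemma down0_bound (R : realType) (t : nat -> R) :
  (forall k, 0 < t k /\ t k <= k.+1%:R^-1) -> down0 t.
Proof.
move=> H; split; first by move=> k; case: (H k).
apply/cvgrPdist_lt => e e0.
apply: filterS (near_infty_natSinv_lt (PosNum e0)) => k /= Hk.
rewrite sub0r normrN gtr0_norm; last by case: (H k).
by case: (H k) => _ /le_lt_trans; apply.
Qed.

Lemma down0_inv (R : realType) : down0 (fun k : nat => (k.+1%:R^-1 : R)).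
Proof.
by apply: down0_bound => k; split; rewrite ?invr_gt0.
Qed.

Lemma tcone0 (R : realType) n (S : set 'rV[R]_n) y : S y -> tcone S y 0.
Proof.
move=> Sy; exists (fun k => k.+1%:R^-1), (fun=> 0); split; first exact: down0_inv.
by split; [exact: cvg_cst | move=> k; rewrite scaler0 addr0].
Qed.

Lemma clarke_unif (R : realType) n (S : set 'rV[R]_n) x d v :
  dclarke S x d v -> forall e, 0 < e -> exists2 del, 0 < del &
  forall t d', 0 < t -> t < del -> `|d' - d| < del -> S (x + t *: d') ->
  exists u, tcone S (x + t *: d') u /\ `|u - v| < e.
Proof.
move=> Hv e e0; apply: contrapT => H.
have Hk : forall k : nat, exists p : R * 'rV[R]_n, 0 < p.1 /\ p.1 <= k.+1%:R^-1 /\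
   `|p.2 - d| < k.+1%:R^-1 /\ S (x + p.1 *: p.2) /\
   forall u, tcone S (x + p.1 *: p.2) u -> e <= `|u - v|.
  move=> k; apply: contrapT => Hn; apply: H; exists k.+1%:R^-1; first by rewrite invr_gt0.
  move=> t d' t0 tl dl Sy; apply: contrapT => Hu; apply: Hn; exists (t, d').
  do 3 (split; first by rewrite /= ?ltW).
  split => // u Tu; rewrite leNgt; apply/negP => lt; apply: Hu; exists u; split => //.
case: (choice Hk) => f Hf.
have dt : down0 (fun k => (f k).1).
  by apply: down0_bound => k; have [? [? _]] := Hf k.
have cd : (fun k => (f k).2) @ \oo --> d.
  apply/cvgrPdistC_lt => eps eps0.
  apply: filterS (near_infty_natSinv_lt (PosNum eps0)) => k /= Hk'.
  by have [_ [_ [/lt_trans H1 _]]] := Hf k; apply: H1.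
have [vk [cvk Hn]] := Hv _ _ dt cd (fun k => (proj1 (proj2 (proj2 (proj2 (Hf k)))))).
have H1 : \forall k \near \oo, `|vk k - v| < e by move/cvgrPdistC_lt: cvk; apply.
have [k [Hk1 Hk2]] := filter_ex (filterI H1 Hn).
have [_ [_ [_ [_ H2]]]] := Hf k.
by have := H2 _ Hk2; rewrite leNgt Hk1.
Qed.

Lemma zmod_id (V : zmodType) (a b c dd f : V) :
  a + (b + c) - (dd + f) = (a + b - dd) + (c - f).
Proof. by rewrite opprD !addrA (addrAC (a + b)). Qed.

Lemma lipD (R : realType) n (S : set 'rV[R]_n) (pr : 'rV[R]_n -> 'rV[R]_n) :
  (forall z p', S p' -> `|z - pr z| <= `|z - p'|) -> (forall z, S (pr z)) ->
  forall z z', `|z - pr z| <= `|z - z'| + `|z' - pr z'|.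
Proof.
move=> Hm Hs z z'; apply: le_trans (Hm z _ (Hs z')) _.
have -> : z - pr z' = (z - z') + (z' - pr z') by rewrite addrA subrK.
exact: ler_normD.
Qed.

Lemma keyK (R : realType) n (S : set 'rV[R]_n) (pr : 'rV[R]_n -> 'rV[R]_n) x d v e del0 :
  (forall z p', S p' -> `|z - pr z| <= `|z - p'|) -> (forall z, S (pr z)) ->
  0 < e -> 0 < del0 ->
  (forall t d', 0 < t -> t < del0 -> `|d' - d| < del0 -> S (x + t *: d') ->
    exists u, tcone S (x + t *: d') u /\ `|u - v| < e) ->
  forall t d' h, 0 < t -> 0 < h -> `|d' - d| + h / t * (`|v| + 2 * e) < del0 -> t < del0 ->
  S (x + t *: d') ->
  `|x + t *: d' + h *: v - pr (x + t *: d' + h *: v)| <= 2 * e * h.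
Proof.
move=> Hm Hs e0 del00 Hu t d' h t0 h0 Hdel tdel Sy.
set y := x + t *: d'.
pose D s := `|y + s *: v - pr (y + s *: v)|.
pose A := [set s | 0 <= s <= h /\ D s <= 2 * e * s].
have D0 : D 0 <= 0.
  by rewrite /D scale0r addr0; apply: le_trans (Hm _ _ Sy) _; rewrite subrr normr0.
have A0 : A 0 by split; [rewrite lexx ltW | rewrite mulr0].
have Ane : A !=set0 by exists 0.
have Aub : ubound A h by move=> s [/andP[_ ?] _].
have hsA : has_sup A by split => //; exists h.
set M := sup A.
have M0 : 0 <= M by exact: sup_upper_bound.
have Mh : M <= h by exact: ge_sup.
have DM : D M <= 2 * e * M.
  apply/ler_addgt0Pr => eta eta0.
  have ep : 0 < eta / (`|v| + 1) by rewrite divr_gt0 // ltr_wpDl.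
  have [s As Ms] := sup_adherent ep hsA.
  have sM : s <= M by exact: sup_upper_bound hsA _ As.
  case: As => /andP[s0 sh] Ds.
  rewrite /D; apply: le_trans (lipD _ _ _ _ Hm Hs _ (y + s *: v)) _.
  have -> : y + M *: v - (y + s *: v) = (M - s) *: v.
    by rewrite scalerBl opprD addrACA subrr add0r.
  rewrite normrZ ger0_norm ?subr_ge0 //.
  have : (M - s) * (`|v| + 1) <= eta.
    rewrite -ler_pdivlMr ?ltr_wpDl //; move: Ms; rewrite -/M; lra.
  rewrite -/(D s); nra.
have [Mh'|hM] := ltP M h; last first.
  have -> : h = M by apply/le_anti; rewrite Mh hM.
  exact: DM.
exfalso.
set z := y + M *: v; set p := pr z.
have Sp : S p by exact: Hs.
pose d'' := t^-1 *: (p - x).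
have Hp : p = x + t *: d'' by rewrite /d'' scalerA mulfV ?gt_eqF // scale1r addrC subrK.
have E1 : d'' - d' = t^-1 *: (p - y).
  by rewrite /d'' /y opprD addrA [in RHS]scalerBr scalerA mulVf ?gt_eqF // scale1r.
have E2 : d'' - d = (d' - d) + (d'' - d') by rewrite [RHS]addrC addrA subrK.
have Hpy : `|p - y| <= h * (`|v| + 2 * e).
  have -> : p - y = (p - z) + M *: v.
    by rewrite /z [in RHS]opprD [in RHS]addrA subrK.
  apply: le_trans (ler_normD _ _) _; rewrite normrZ ger0_norm // distrC.
  move: DM; rewrite /D -/z -/p => DM.
  have : 0 <= `|v| by [].
  nra.
have Hd'' : `|d'' - d| < del0.
  rewrite E2 E1; apply: le_lt_trans (ler_normD _ _) _.
  rewrite normrZ ger0_norm ?invr_ge0 ?ltW //.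
  apply: le_lt_trans Hdel; rewrite lerD2l.
  have ti : 0 < t^-1 by rewrite invr_gt0.
  move: Hpy; nra.
have [u [Tu uv]] := Hu t d'' t0 tdel Hd'' (eq_ind _ S Sp _ Hp).
rewrite -Hp in Tu.
case: Tu => sg [uj [[sg0 sgc] [ujc Sj]]].
have F1 : \forall j \near \oo, `|0 - sg j| < h - M.
  by move/cvgrPdist_lt: sgc; apply; rewrite subr_gt0.
have F2 : \forall j \near \oo, `|u - uj j| < e - `|u - v|.
  by move/cvgrPdist_lt: ujc; apply; rewrite subr_gt0.
have [j [J1 J2]] := filter_ex (filterI F1 F2).
move: J1; rewrite sub0r normrN gtr0_norm // => J1.
have As' : A (M + sg j).
  split; first by apply/andP; split; [rewrite addr_ge0 // ltW | lra].
  rewrite /D.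
  apply: le_trans (Hm _ _ (Sj j)) _.
  have -> : y + (M + sg j) *: v - (p + sg j *: uj j) = (z - p) + sg j *: (v - uj j).
    by rewrite /z scalerDl scalerBr zmod_id.
  apply: le_trans (ler_normD _ _) _; rewrite normrZ gtr0_norm //.
  have Hvu : `|v - uj j| <= e.
    have -> : v - uj j = (v - u) + (u - uj j) by rewrite addrA subrK.
    apply: le_trans (ler_normD _ _) _; rewrite (distrC v u); lra.
  move: DM; rewrite /D -/z -/p => DM.
  have := sg0 j; nra.
have := sup_upper_bound hsA As'; rewrite -/M.
have := sg0 j; lra.
Qed.
Lemma proj_ex (R : realType) (n : nat) (S : set 'rV[R]_n) (z q : 'rV[R]_n) :
  closed S -> S q -> exists2 p, S p & forall p', S p' -> `|z - p| <= `|z - p'|.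
Proof.
move=> cS Sq.
pose r := `|z - q| + 1.
have r0 : 0 < r by rewrite /r ltr_wpDl.
pose A := S `&` closed_ball z r.
have A0 : A !=set0.
  by exists q; split => //; rewrite closed_ballE //= /closed_ball_ /= /r lerDl ler01.
have cA : compact A.
  apply: bounded_closed_compact; last by apply: closedI => //; exact: closed_ball_closed.
  exists (`|z| + r); split; first by rewrite realE addr_ge0 // ltW. 
  move=> M HM p [_]; rewrite closed_ballE //= => Hp.
  apply: le_trans (ltW HM).
  have -> : p = z - (z - p) by rewrite opprB addrC subrK.
  by apply: (le_trans (ler_normB _ _)); rewrite lerD2l.
have cf : {within A, continuous (fun p => `|z - p|)}.
  apply: continuous_subspaceT => p.
  apply: continuous_comp; last exact: norm_continuous.
  exact: (@continuousB _ _ _ (fun=> z) id p (@cst_continuous _ _ z p) cvg_id).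
have [c] := EVT_min_rV A0 cA cf.
rewrite inE => -[Sc Hc] minc.
exists c => // p' Sp'.
have [Hp'|Hp'] := leP (`|z - p'|) r.
  by apply: minc; rewrite inE; split => //; rewrite closed_ballE.
apply: ltW; apply: le_lt_trans Hp'.
move: Hc; rewrite closed_ballE //=.
Qed.

Lemma seqM (R : realType) n (S : set 'rV[R]_n) x d v (t h : nat -> R) (d' : nat -> 'rV[R]_n) :
  closed S -> S x -> dclarke S x d v -> down0 t -> d' @ \oo --> d ->
  (forall k, S (x + t k *: d' k)) -> (forall k, 0 < h k) ->
  (fun k => h k / t k) @ \oo --> 0 ->
  exists e : nat -> 'rV[R]_n, e @ \oo --> (0 : 'rV[R]_n) /\
    forall k, S (x + t k *: d' k + h k *: (v + e k)).
Proof.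
move=> cS Sx Hv [t0 tc] dc Sk h0 htc.
have Hp : forall z : 'rV[R]_n, exists p, S p /\ (forall p', S p' -> `|z - p| <= `|z - p'|).
  by move=> z; have [p ? ?] := proj_ex R n S z x cS Sx; exists p.
case: (choice Hp) => pr Hpr.
have Hs : forall z, S (pr z) by move=> z; case: (Hpr z).
have Hm : forall z p', S p' -> `|z - pr z| <= `|z - p'| by move=> z; case: (Hpr z).
pose y k := x + t k *: d' k.
exists (fun k => (h k)^-1 *: (pr (y k + h k *: v) - (y k + h k *: v))); split; last first.
  move=> k; rewrite -/(y k) scalerDr addrA scalerA mulfV ?gt_eqF // scale1r.
  by rewrite addrC subrK.
apply/cvgrPdist_lt => eps eps0.
have e4 : 0 < eps / 4 by rewrite divr_gt0.
have [del0 del00 Hu] := clarke_unif R n S x d v Hv (eps / 4) e4.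
pose c := `|v| + 2 * (eps / 4).
have c0 : 0 < c by rewrite /c ltr_wpDl // mulr_gt0.
have F1 : \forall k \near \oo, `|0 - t k| < del0 by move/cvgrPdist_lt: tc; apply.
have F2 : \forall k \near \oo, `|d - d' k| < del0 / 2.
  by move/cvgrPdist_lt: dc; apply; rewrite divr_gt0.
have F3 : \forall k \near \oo, `|0 - h k / t k| < del0 / 2 / c.
  by move/cvgrPdist_lt: htc; apply; rewrite !divr_gt0.
apply: filterS (filterI F1 (filterI F2 F3)) => k [A1 [A2 A3]].
move: A1 A3; rewrite !sub0r !normrN !gtr0_norm ?divr_gt0 // => A1 A3.
have := keyK R n S pr x d v (eps / 4) del0 Hm Hs e4 del00 Hu (t k) (d' k) (h k) (t0 k) (h0 k).
rewrite -/c -/(y k) distrC => K.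
have Hd : `|d - d' k| + h k / t k * c < del0.
  rewrite ltr_pdivlMr // in A3; lra.
have {}K := K Hd A1 (Sk k).
rewrite normrZ gtr0_norm ?invr_gt0 // distrC.
rewrite -(ltr_pM2l (h0 k)) mulrA mulfV ?gt_eqF // mul1r.
apply: le_lt_trans K _.
have := h0 k; nra.
Qed.


Lemma sc3 (R : realType) n (a p q r : 'rV[R]_n) (c : R) :
  a + c *: p + c *: (q + r) = a + c *: (p + q + r).
Proof. by rewrite -[_ + c *: (q + r)]addrA -scalerDr addrA. Qed.

Lemma dclarke0 (R : realType) n (S : set 'rV[R]_n) x d : dclarke S x d 0.
Proof.
move=> t dk _ _ Sk; exists (fun=> 0); split; first exact: cvg_cst.
by apply: nearW => k; exact: tcone0.
Qed.

Lemma cvg_sc0 (R : realType) n (a : nat -> R) (w : nat -> 'rV[R]_n) (w0 : 'rV[R]_n) :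
  a @ \oo --> 0 -> w @ \oo --> w0 -> (fun k => a k *: w k) @ \oo --> (0 : 'rV[R]_n).
Proof. by move=> ha hw; rewrite -(scale0r w0); exact: cvgZ. Qed.

Lemma cvg_mulc0 (R : realType) (c : R) (a : nat -> R) :
  a @ \oo --> 0 -> (fun k => c * a k) @ \oo --> 0.
Proof. by move=> ha; rewrite -(mulr0 c); apply: cvgM => //; exact: cvg_cst. Qed.

Theorem proposition2p3 (R : realType) (n : nat) (S : set 'rV[R]_n)
    (x d : 'rV[R]_n) :
  closed S -> S x -> tcone S x d ->
  setsum_mk (tcone2 S x d) (dclarke S x d) = tcone2 S x d /\
  setsum_mk (tcone2asym S x d) (dclarke S x d) = tcone2asym S x d.
Proof.
move=> cS Sx Td; split; apply/seteqP; split.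
- move=> z [w [v [Tw [Cv Ez]]]]; subst z.
  case: Tw => t [wk [[t0 tc] [wc Sk]]].
  pose d' k := d + (2^-1 * t k) *: wk k.
  have dc : d' @ \oo --> d.
    rewrite -[X in _ --> X]addr0; apply: cvgD; first exact: cvg_cst.
    exact: (cvg_sc0 _ _ _ _ _ (cvg_mulc0 _ _ _ tc) wc).
  have Sk' : forall k, S (x + t k *: d' k).
    by move=> k; rewrite /d' scalerDr scalerA addrA mulrCA -expr2.
  have h0 : forall k, 0 < 2^-1 * t k ^+ 2 by move=> k; rewrite mulr_gt0 ?exprn_gt0.
  have hc : (fun k => 2^-1 * t k ^+ 2 / t k) @ \oo --> 0.
    have -> : (fun k => 2^-1 * t k ^+ 2 / t k) = (fun k => 2^-1 * t k).
      by apply: funext => k; rewrite expr2 mulrA mulfK ?gt_eqF.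
    exact: cvg_mulc0 _ _ _ tc.
  have [e [ec Se]] := seqM R n S x d v t _ d' cS Sx Cv (conj t0 tc) dc Sk' h0 hc.
  exists t, (fun k => wk k + v + e k); split; first by [].
  split.
    rewrite -[X in _ --> X]addr0; apply: cvgD => //; apply: cvgD => //; exact: cvg_cst.
  move=> k; have := Se k; rewrite /d' scalerDr scalerA addrA mulrCA -expr2.
  by rewrite sc3.
- by move=> w Tw; exists w, 0; do 2 split => //; [exact: dclarke0 | rewrite addr0].
- move=> z [w [v [Tw [Cv Ez]]]]; subst z.
  case: Tw => t [r [wk [[t0 tc] [[r0 rc] [trc [wc Sk]]]]]].
  pose d' k := d + (2^-1 * r k) *: wk k.
  have dc : d' @ \oo --> d.
    rewrite -[X in _ --> X]addr0; apply: cvgD; first exact: cvg_cst.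
    exact: (cvg_sc0 _ _ _ _ _ (cvg_mulc0 _ _ _ rc) wc).
  have E : forall k, t k * (2^-1 * r k) = 2^-1 * t k * r k.
    by move=> k; rewrite mulrCA mulrA.
  have Sk' : forall k, S (x + t k *: d' k).
    by move=> k; rewrite /d' scalerDr scalerA addrA E.
  have h0 : forall k, 0 < 2^-1 * t k * r k by move=> k; rewrite !mulr_gt0.
  have hc : (fun k => 2^-1 * t k * r k / t k) @ \oo --> 0.
    have -> : (fun k => 2^-1 * t k * r k / t k) = (fun k => 2^-1 * r k).
      by apply: funext => k; rewrite mulrAC mulfK ?gt_eqF.
    exact: cvg_mulc0 _ _ _ rc.
  have [e [ec Se]] := seqM R n S x d v t _ d' cS Sx Cv (conj t0 tc) dc Sk' h0 hc.
  exists t, r, (fun k => wk k + v + e k); do 3 (split; first by []).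
  split.
    rewrite -[X in _ --> X]addr0; apply: cvgD => //; apply: cvgD => //; exact: cvg_cst.
  move=> k; have := Se k; rewrite /d' scalerDr scalerA addrA E.
  by rewrite sc3.
- by move=> w Tw; exists w, 0; do 2 split => //; [exact: dclarke0 | rewrite addr0].
Qed.
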